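(* Let $\{A_n\}_{n\geq1}$ be an increasing sequence of finite sets of isolated points of $\mathbb{R}^2$ with $f(n)=\sharp A_n\to+\infty$, $S=\bigcup_n A_n$, and $\{Z(x):x\in S\}$ a random field whose variables all have distribution function $F$, $\overline F=1-F$. Let $\tau>0$ and $\{u_n(\tau)\}$ be reals with $E\big(\sum_{x\in A_n}\mathbf{1}_{\{Z(x)>u_n(\tau)\}}\big)\to\tau$. Suppose $\mathbf{Z}_A=\{Z(x):x\in A_n\}_{n\ge1}$ satisfies $D(u_n(\tau),k_n,l_n)$ and let, for each $n$, $\mathcal{B}_n=\{B_n^{(s,t)}:s,t=1,\dots,k_n\}$ be a family of $k_n^2$ pairwise disjoint subsets of $A_n$ with $\sharp B_n^{(s,t)}\sim f(n)/k_n^2$ and $P(\bigvee_{x\in A_n}Z(x)\le u_n(\tau))-\prod_{s,t}P(\bigvee_{x\in B_n^{(s,t)}}Z(x)\le u_n(\tau))\to0$. Write $N_n^{(s,t)}=\sum_{x\in B_n^{(s,t)}}\mathbf 1_{\{Z(x)>u_n(\tau)\}}$. If $\mathbf{Z}_A$ has spatial extremal index $\theta_A$, then $$\theta_A=\lim_{n\to+\infty}\frac{1}{k_n^2}\sum_{B_n^{(s,t)}\in\mathcal{B}_n}\Big(E\big(N_n^{(s,t)}\,\big|\,N_n^{(s,t)}>0\big)\Big)^{-1}.$$ Moreover, if $\lim_{n\to\infty}E(N_n^{(s,t)}\mid N_n^{(s,t)}>0)=1$ uniformly in $s,t\in\{1,\dots,k_n\}$, then $\theta_A=1$.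
   Context: $\pi_1,\pi_2$ are coordinate projections; $f_i(n)=\sharp\pi_i(A_n)$; $\bigvee$ is maximum. The pair $(I,J)$ is in $\mathcal{S}(\pi_i(A_n),l_n)$ if $I,J$ are sets of consecutive values of $\pi_i(A_n)$ separated by at least $l_n$ values of $\pi_i(A_n)$. Condition $D(u_n,k_n,l_n)$: there are positive integer sequences $l_n\to\infty$, $k_n\to\infty$ with $k_nl_nf_i(n)/f(n)\to0$ ($i=1,2$) and $k_n^2\alpha(l_n,u_n)\to0$, where $\alpha(l_n,u_n)=\sup|P(\bigvee_{x\in C\cup D}Z(x)\le u_n)-P(\bigvee_{x\in C}Z(x)\le u_n)P(\bigvee_{x\in D}Z(x)\le u_n)|$ over subsets $C,D\subseteq A_n$ whose $\pi_i$-projections form a pair in $\mathcal{S}(\pi_i(A_n),l_n)$ for each $i$. Spatial extremal index: $\mathbf{Z}_A$ has spatial extremal index $\theta_A$ if for each $\tau>0$ and any real sequence $\{u_n(\tau)\}$ with $E(\sum_{x\in A_n}\mathbf 1_{\{Z(x)>u_n(\tau)\}})\to\tau$ one has $P(\bigvee_{x\in A_n}Z(x)\le u_n(\tau))\to e^{-\theta_A\tau}$. *)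

(* Defs.v *)
From HB Require Import structures.
From mathcomp Require Import all_boot all_order all_algebra.
From mathcomp Require Import finmap.
From mathcomp Require Import all_classical all_reals all_analysis.
Set Implicit Arguments. Unset Strict Implicit. Unset Printing Implicit Defensive.
Import Order.TTheory GRing.Theory Num.Theory.
Import numFieldNormedType.Exports.
Local Open Scope classical_set_scope.
Local Open Scope ring_scope.
Local Open Scope fset_scope.

Section spatial_extremes.
Context {d : measure_display} {T : measurableType d} {R : realType}.
Implicit Types (P : probability T R) (Z : R * R -> T -> R).

Definition proj1s (A : {fset (R * R)}) : {fset R} := [fset x.1 | x in A].
Definition proj2s (A : {fset (R * R)}) : {fset R} := [fset x.2 | x in A].

Definition maxZ Z (C : {fset (R * R)}) (w : T) : \bar R :=
  \big[maxe/-oo%E]_(x <- C) (Z x w)%:E.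

Definition maxle Z (C : {fset (R * R)}) (u : R) : set T :=
  [set w | (maxZ Z C w <= u%:E)%E].

Definition Nexc Z (C : {fset (R * R)}) (u : R) : T -> R :=
  fun w => \sum_(x <- C) \1_[set w' | u < Z x w'] w.

Definition condE P (X : T -> R) (E : set T) : R :=
  fine ('E_P[X \* \1_E]) / fine (P E).

Definition consecutive (V I : {fset R}) : Prop :=
  I `<=` V /\
  forall x y z, x \in I -> z \in I -> y \in V -> x <= y <= z -> y \in I.

Definition sepS (V : {fset R}) (l : nat) (I J : {fset R}) : Prop :=
  [/\ consecutive V I, consecutive V J,
      (forall x z, x \in I -> z \in J -> x < z) \/
      (forall x z, x \in I -> z \in J -> z < x) &
      forall x z, x \in I -> z \in J ->
        (l <= #|` [fset y in V | (Num.min x z < y < Num.max x z)%R]|)%N].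

Definition alpha P Z (A : {fset (R * R)}) (l : nat) (u : R) : R :=
  sup [set r | exists C D : {fset (R * R)},
         [/\ C `<=` A, D `<=` A,
             sepS (proj1s A) l (proj1s C) (proj1s D),
             sepS (proj2s A) l (proj2s C) (proj2s D) &
             r = `| fine (P (maxle Z (C `|` D) u))
                    - fine (P (maxle Z C u)) * fine (P (maxle Z D u)) |]].

Definition nat_to_infty (v : nat -> nat) : Prop :=
  forall M : nat, \forall n \near \oo, (M <= v n)%N.

Definition condD P Z (A : nat -> {fset (R * R)}) (u : nat -> R)
    (k l : nat -> nat) : Prop :=
  [/\ (forall n, (0 < l n)%N) /\ (forall n, (0 < k n)%N),
      nat_to_infty l /\ nat_to_infty k,
      (fun n => ((k n * l n * #|` proj1s (A n)|)%:R / (#|` A n|)%:R : R))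
        @ \oo --> (0 : R),
      (fun n => ((k n * l n * #|` proj2s (A n)|)%:R / (#|` A n|)%:R : R))
        @ \oo --> (0 : R) &
      (fun n => ((k n) ^ 2)%:R * alpha P Z (A n) (l n) (u n)) @ \oo --> (0 : R)].

Definition spatial_extremal_index P Z (A : nat -> {fset (R * R)}) (theta : R)
  : Prop :=
  forall tau : R, 0 < tau -> forall u : nat -> R,
    (fun n => fine ('E_P[Nexc Z (A n) (u n)])) @ \oo --> tau ->
    (fun n => fine (P (maxle Z (A n) (u n)))) @ \oo --> expR (- (theta * tau)).

End spatial_extremes.

(* Main.v *)
Require Import Defs.
From HB Require Import structures.
From mathcomp Require Import all_boot all_order all_algebra.
From mathcomp Require Import finmap.
From mathcomp Require Import all_classical all_reals all_analysis.
From mathcomp Require Import ring lra.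
Import Order.TTheory GRing.Theory Num.Theory.
Import numFieldNormedType.Exports.
Local Open Scope classical_set_scope.
Local Open Scope ring_scope.
Lemma exp_lb (R : realType) (p δ : R) : 0 <= p -> p <= δ -> δ <= 1/2 ->
  expR (- (p + 2 * δ * p)) <= 1 - p.
Proof.
move=> p0 pd d2.
have X0 := expR_gt0 (p + 2 * δ * p).
have hX := expR_ge1Dx (p + 2 * δ * p).
rewrite expRN -[_^-1]mul1r ler_pdivrMr //.
have h1 : 0 <= 1 - p by lra.
have h2 : 1 <= (1 - p) * (1 + (p + 2 * δ * p)) by nra.
apply: (le_trans h2); exact: ler_wpM2l.
Qed.

Lemma prod_ub (R : realType) (I : finType) (p : I -> R) :
  (forall i, 0 <= p i <= 1) -> \prod_i (1 - p i) <= expR (- \sum_i p i).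
Proof.
move=> hp; rewrite -sumrN expR_sum; apply: ler_prod => i _.
have /andP[h0 h1] := hp i.
rewrite subr_ge0 h1 /=; have := expR_ge1Dx (- p i); by rewrite addrC.
Qed.

Lemma prod_lb (R : realType) (I : finType) (p : I -> R) (δ : R) :
  (forall i, 0 <= p i <= δ) -> δ <= 1/2 ->
  expR (- (\sum_i p i + 2 * δ * \sum_i p i)) <= \prod_i (1 - p i).
Proof.
move=> hp d2.
have -> : - (\sum_i p i + 2 * δ * \sum_i p i) = \sum_i - (p i + 2 * δ * p i).
  by rewrite sumrN big_split /= mulr_sumr.
rewrite expR_sum; apply: ler_prod => i _.
have /andP[h0 h1] := hp i.
rewrite (ltW (expR_gt0 _)) /=; exact: exp_lb.
Qed.

Lemma sum_const_pair (R : realType) (K : nat) (c : R) :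
  \sum_(x : 'I_K * 'I_K) c = c * (K ^ 2)%:R.
Proof. by rewrite sumr_const card_prod card_ord mulnn mulr_natr. Qed.

Lemma sum_cvg (R : realType) (K : nat -> nat) (p : forall n, 'I_(K n) * 'I_(K n) -> R) (C L : R) :
  0 < C ->
  (forall d, 0 < d -> \forall n \near \oo, forall x, 0 <= p n x <= d) ->
  (\forall n \near \oo, \sum_x p n x <= C) ->
  (fun n => \prod_x (1 - p n x)) @ \oo --> expR (- L) ->
  (fun n => \sum_x p n x) @ \oo --> L.
Proof.
move=> C0 hd hC hprod.
apply/cvgrPdist_le => eps eps0.
set η := eps / 2.
have η0 : 0 < η by rewrite divr_gt0.
set δ := Num.min (1/2) (η / (2 * C)).
have δ0 : 0 < δ by rewrite lt_min divr_gt0 //= divr_gt0 // mulr_gt0.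
have δ2 : δ <= 1/2 by rewrite ge_min lexx.
have δC : δ * (2 * C) <= η.
  by rewrite -ler_pdivlMr ?mulr_gt0 // ge_min lexx orbT.
set m := Num.min (expR (- L) - expR (- L - η)) (expR (- L + η) - expR (- L)).
have m0 : 0 < m.
  rewrite lt_min !subr_gt0 !ltr_expR; apply/andP; split; lra.
move/cvgrPdist_le: hprod => /(_ m m0) hprod.
near=> n.
have hpn : forall x, 0 <= p n x <= δ by near: n; exact: hd.
have hSC : \sum_x p n x <= C by near: n; exact: hC.
have hPn : `|expR (- L) - \prod_x (1 - p n x)| <= m by near: n; exact: hprod.
set S := \sum_x p n x in hSC *.
set Pi := \prod_x (1 - p n x) in hPn.
have S0 : 0 <= S by apply: sumr_ge0 => x _; have /andP[] := hpn x.
have hub : Pi <= expR (- S).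
  apply: prod_ub => x; have /andP[h0 h1] := hpn x; rewrite h0 /=; lra.
have hlb : expR (- (S + 2 * δ * S)) <= Pi by exact: prod_lb.
move/ler_normlP: hPn => [hP1 hP2].
have m1 : m <= expR (- L) - expR (- L - η) by rewrite ge_min lexx.
have m2 : m <= expR (- L + η) - expR (- L) by rewrite ge_min lexx orbT.
have e1 : expR (- L - η) <= expR (- S) by lra.
have e2 : expR (- (S + 2 * δ * S)) <= expR (- L + η) by lra.
rewrite ler_expR in e1; rewrite ler_expR in e2.
have : δ * S <= δ * C by rewrite ler_wpM2l // ltW.
move=> hh; rewrite ler_norml; apply/andP; split; rewrite /η in e1 e2 δC *; nra.
Unshelve. all: end_near.
Qed.

Lemma pt_bound (R : realType) (p a tau eps : R) : 0 < tau -> 0 <= p ->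
  `|a - tau| <= eps -> eps <= tau / 2 ->
  `|p / tau - p / a| <= p * (2 * eps / tau ^+ 2).
Proof.
move=> t0 p0 /ler_normlP [h1 h2] e2.
have a0 : tau / 2 <= a by lra.
have ap : 0 < a by lra.
have -> : p / tau - p / a = (p * (a - tau)) / (tau * a).
  by field; apply/andP; split; rewrite gt_eqF.
rewrite normrM normfV (ger0_norm (ltW (mulr_gt0 t0 ap))) ler_pdivrMr ?mulr_gt0 //.
rewrite normrM (ger0_norm p0).
have hn : `|a - tau| <= eps by apply/ler_normlP; split.
have : p * `|a - tau| <= p * eps by rewrite ler_wpM2l.
have -> : p * (2 * eps / tau ^+ 2) * (tau * a) = p * eps * (2 * a / tau).
  by field; rewrite gt_eqF.
have : 1 <= 2 * a / tau by rewrite ler_pdivlMr // mul1r; lra.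
have : 0 <= p * eps by apply: mulr_ge0 => //; apply: le_trans hn.
nra.
Qed.

Lemma core (R : realType) (K : nat -> nat) (p e : forall n, 'I_(K n) * 'I_(K n) -> R) (tau L : R) :
  0 < tau ->
  (forall M, \forall n \near \oo, (M <= K n)%N) ->
  (forall n x, 0 <= p n x <= e n x) ->
  (forall eps, 0 < eps -> \forall n \near \oo, forall x,
      `|((K n)^2)%:R * e n x - tau| <= eps) ->
  (fun n => \prod_x (1 - p n x)) @ \oo --> expR (- L) ->
  (fun n => ((K n)^2)%:R^-1 * \sum_x (p n x / e n x)) @ \oo --> L / tau.
Proof.
move=> t0 Kinf hpe he hprod.
set C := 2 * tau.
have C0 : 0 < C by rewrite /C; lra.
have Kpos : \forall n \near \oo, 0 < ((K n)^2)%:R :> R.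
  near=> n; have : (1 <= K n)%N by near: n; exact: Kinf.
  by rewrite ltr0n expn_gt0 orbC => ->.
have hC : \forall n \near \oo, \sum_x e n x <= C.
  near=> n.
  have kp : 0 < ((K n)^2)%:R :> R by near: n; exact: Kpos.
  have hx : forall x, `|((K n)^2)%:R * e n x - tau| <= tau by near: n; exact: he.
  rewrite -(ler_pM2l kp) mulr_sumr.
  apply: (@le_trans _ _ (\sum_(x : 'I_(K n) * 'I_(K n)) C)); last first.
    by rewrite sum_const_pair mulrC.
  apply: ler_sum => x _; have /ler_normlP [_ h] := hx x; rewrite /C; lra.
have hd : forall d, 0 < d -> \forall n \near \oo, forall x, 0 <= p n x <= d.
  move=> d d0.
  set M := (Num.truncn (C / d)).+1.
  have hM : C / d < M%:R by exact: truncnS_gt.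
  near=> n.
  have kM : (M <= K n)%N by near: n; exact: Kinf.
  have k1 : (1 <= K n)%N by near: n; exact: Kinf.
  have hx' : forall x, `|((K n)^2)%:R * e n x - tau| <= tau by near: n; apply: he.
  move=> x; have hx := hx' x.
  have /andP[p0 pe] := hpe n x; rewrite p0 /=.
  apply: (le_trans pe).
  have kM' : M%:R <= ((K n)^2)%:R :> R.
    rewrite ler_nat -mulnn; apply: (leq_trans kM); exact: leq_pmulr.
  have : C < d * ((K n)^2)%:R.
    rewrite -ltr_pdivrMl // mulrC; exact: (lt_le_trans hM kM').
  have /ler_normlP [_ h] := hx.
  have kp : 0 < ((K n)^2)%:R :> R by apply: lt_le_trans kM'; rewrite ltr0n.
  rewrite /C => h2.
  have : ((K n)^2)%:R * e n x <= ((K n)^2)%:R * d by lra.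
  by rewrite ler_pM2l.
have hS : (fun n => \sum_x p n x) @ \oo --> L.
  apply: (@sum_cvg R K p C L C0 hd _ hprod).
  near=> n; apply: le_trans (_ : \sum_x e n x <= C); last by near: n.
  by apply: ler_sum => x _; have /andP[] := hpe n x.
apply/cvgrPdist_le => eps eps0.
set e2 := Num.min (tau / 2) (eps * tau ^+ 2 / (4 * C)).
have e20 : 0 < e2 by rewrite lt_min !divr_gt0 ?mulr_gt0 ?exprn_gt0 //; lra.
have e2t : e2 <= tau / 2 by rewrite ge_min lexx.
have e2e : e2 <= eps * tau ^+ 2 / (4 * C) by rewrite ge_min lexx orbT.
move/cvgrPdist_le: hS => /(_ (eps * tau / 2)) hS.
have et0 : 0 < eps * tau / 2 by rewrite divr_gt0 ?mulr_gt0.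
near=> n.
have hSn : `|L - \sum_x p n x| <= eps * tau / 2 by near: n; exact: hS.
have hx : forall x, `|((K n)^2)%:R * e n x - tau| <= e2 by near: n; exact: he.
have hSC : \sum_x e n x <= C by near: n; exact: hC.
set S := \sum_x p n x in hSn.
have SC : S <= C by apply: le_trans hSC; apply: ler_sum => x _; have /andP[] := hpe n x.
have S0 : 0 <= S by apply: sumr_ge0 => x _; have /andP[] := hpe n x.
have -> : ((K n)^2)%:R^-1 * \sum_x (p n x / e n x) =
    \sum_x (p n x / (((K n)^2)%:R * e n x)).
  by rewrite mulr_sumr; apply: eq_bigr => x _; rewrite invfM mulrCA.
have h1 : `|S / tau - \sum_x (p n x / (((K n)^2)%:R * e n x))|
     <= S * (2 * e2 / tau ^+ 2).
  rewrite /S !mulr_suml -sumrB; apply: le_trans (ler_norm_sum _ _ _) _.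
  apply: ler_sum => x _; apply: pt_bound => //; by have /andP[] := hpe n x.
have h2 : S * (2 * e2 / tau ^+ 2) <= eps / 2.
  have : S * (2 * e2 / tau ^+ 2) <= C * (2 * (eps * tau ^+ 2 / (4 * C)) / tau ^+ 2).
    apply: ler_pM => //; first by rewrite divr_ge0 ?mulr_ge0 ?exprn_ge0 ?ltW.
    by rewrite ler_pM2r ?invr_gt0 ?exprn_gt0 // ler_pM2l.
  have -> : C * (2 * (eps * tau ^+ 2 / (4 * C)) / tau ^+ 2) = eps / 2.
    by field; apply/andP; split; rewrite gt_eqF ?exprn_gt0.
  by [].
have h3 : `|L / tau - S / tau| <= eps / 2.
  rewrite -mulrBl normrM normfV (gtr0_norm t0) ler_pdivrMr //.
  apply: (le_trans hSn); rewrite mulrAC //.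
have := ler_normD (L / tau - S / tau) (S / tau - \sum_x (p n x / (((K n)^2)%:R * e n x))).
rewrite addrA subrK => h4.
apply: (le_trans h4); lra.
Unshelve. all: end_near.
Qed.

Lemma inv_near1 (R : realType) (c eps : R) : 0 < eps ->
  `|c - 1| <= Num.min (1/2) (eps / 2) -> `|c^-1 - 1| <= eps.
Proof.
move=> e0 h.
have h1 : `|c - 1| <= 1/2 by apply: le_trans h _; rewrite ge_min lexx.
have h2 : `|c - 1| <= eps / 2 by apply: le_trans h _; rewrite ge_min lexx orbT.
move/ler_normlP: h1 => [h1a h1b].
have c0 : 1/2 <= c by lra.
have cp : 0 < c by lra.
have -> : c^-1 - 1 = (1 - c) / c by field; rewrite gt_eqF.
rewrite normrM normfV (gtr0_norm cp) ler_pdivrMr // distrC.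
apply: (le_trans h2); move/ler_normlP: h2 => [h2a h2b]; nra.
Qed.

Lemma avg_to1 (R : realType) (K : nat -> nat) (c : forall n, 'I_(K n) * 'I_(K n) -> R) :
  (forall n, (0 < K n)%N) ->
  (forall eps, 0 < eps -> \forall n \near \oo, forall x, `|c n x - 1| <= eps) ->
  (fun n => ((K n)^2)%:R^-1 * \sum_x (c n x)^-1) @ \oo --> (1 : R).
Proof.
move=> K0 hc; apply/cvgrPdist_le => eps e0.
have hm : 0 < Num.min (1/2) (eps / 2) by rewrite lt_min !divr_gt0 //.
near=> n.
have hx : forall x, `|c n x - 1| <= Num.min (1/2) (eps / 2) by near: n; exact: hc.
have kp : 0 < ((K n)^2)%:R :> R by rewrite ltr0n expn_gt0 K0.
have -> : 1 - ((K n)^2)%:R^-1 * \sum_x (c n x)^-1 =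
    ((K n)^2)%:R^-1 * \sum_x (1 - (c n x)^-1).
  by rewrite sumrB sum_const_pair mulrBr mul1r mulVf // gt_eqF.
rewrite normrM normfV (gtr0_norm kp) ler_pdivrMl //.
apply: (le_trans (ler_norm_sum _ _ _)).
apply: (@le_trans _ _ (\sum_(x : 'I_(K n) * 'I_(K n)) eps)); last first.
  by rewrite sum_const_pair mulrC.
apply: ler_sum => x _; rewrite distrC; exact: inv_near1.
Unshelve. all: end_near.
Qed.

Section meas.
Context {d : measure_display} {T : measurableType d} {R : realType}.
Variables (P : probability T R) (Z : R * R -> T -> R) (U : set (R * R)).
Hypothesis mZ : forall x, U x -> measurable_fun setT (Z x).

Definition Nseq (s : seq (R * R)) (r : R) : T -> R :=
  fun w => \sum_(x <- s) \1_[set w' | r < Z x w'] w.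

Lemma mgt x r : U x -> measurable [set w | r < Z x w].
Proof.
move=> Ux; have := mZ x Ux measurableT _ (measurable_itv `]r, +oo[).
by rewrite setTI preimage_itvoy.
Qed.

Lemma mle x r : U x -> measurable [set w | Z x w <= r].
Proof.
move=> Ux; have := mZ x Ux measurableT _ (measurable_itv `]-oo, r]).
by rewrite setTI preimage_itvNyc.
Qed.

Lemma indic_ge0 (A : set T) w : 0 <= (\1_A w : R).
Proof. by rewrite indicE ler0n. Qed.

Lemma Nseq_ge0 s r w : 0 <= Nseq s r w.
Proof. by apply: sumr_ge0 => x _; exact: indic_ge0. Qed.

Lemma Nseq_cons x s r : [set w | 0 < Nseq (x :: s) r w] =
  [set w | r < Z x w] `|` [set w | 0 < Nseq s r w].
Proof.
apply/seteqP; split => w /=; rewrite /Nseq big_cons indicE.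
- case: (boolP (w \in _)); rewrite ?inE /= => h; first by left.
  by rewrite add0r => ?; right.
- case=> h.
    rewrite mem_set //; apply: (lt_le_trans ltr01); rewrite lerDl.
    exact: Nseq_ge0.
  apply: (lt_le_trans h); rewrite lerDr; exact: ler0n.
Qed.

Lemma mNseq s r : (forall x, x \in s -> U x) -> measurable [set w | 0 < Nseq s r w].
Proof.
elim: s => [|x s IH] hs.
  have -> : [set w | 0 < Nseq [::] r w] = set0.
    by apply/seteqP; split => w //=; rewrite /Nseq big_nil ltxx.
  exact: measurable0.
rewrite Nseq_cons; apply: measurableU.
  by apply: mgt; apply: hs; rewrite mem_head.
by apply: IH => y ys; apply: hs; rewrite in_cons ys orbT.
Qed.

Lemma PNseq_le s r : (forall x, x \in s -> U x) ->
  (P [set w | (0 < Nseq s r w)%R] <= \sum_(x <- s) P [set w | (r < Z x w)%R])%E.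
Proof.
elim: s => [|x s IH] hs.
  have -> : [set w | 0 < Nseq [::] r w] = set0.
    by apply/seteqP; split => w //=; rewrite /Nseq big_nil ltxx.
  by rewrite big_nil measure0.
have hs' : forall y, y \in s -> U y by move=> y ys; apply: hs; rewrite in_cons ys orbT.
have Ux : U x by apply: hs; rewrite mem_head.
rewrite Nseq_cons big_cons; apply: le_trans (measureU2 _ (mgt x r Ux) (mNseq s r hs')) _.
by apply: leeD => //; exact: IH.
Qed.

Lemma ENseq s r : (forall x, x \in s -> U x) ->
  ('E_P[Nseq s r] = \sum_(x <- s) P [set w | (r < Z x w)%R])%E.
Proof.
move=> hs; rewrite unlock /Nseq.
pose g x w : \bar R := if `[< U x >] then (\1_[set w' | r < Z x w'] w)%:E else 0%E.
have hg : forall w, ((\sum_(x <- s) \1_[set w' | r < Z x w'] w)%:E = \sum_(x <- s) g x w)%E.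
  move=> w; rewrite -sumEFin; apply: eq_big_seq => x xs.
  by rewrite /g asboolT //; apply: hs.
under eq_integral do rewrite hg.
rewrite ge0_integral_sum //.
- apply: eq_big_seq => x xs; rewrite /g asboolT; last by apply: hs.
  rewrite integral_indic ?setIT //.
  by apply: mgt; apply: hs.
- move=> x; rewrite /g; case: (asboolP (U x)) => Ux; last exact: measurable_cst.
  apply/measurable_realfun.measurable_EFinP; apply: measurable_realfun.measurable_indic.
  exact: mgt.
- by move=> x w _; rewrite /g; case: (asboolP (U x)) => _ //; rewrite lee_fin indic_ge0.
Qed.


Lemma PfinE (A : set T) : measurable A -> P A = (fine (P A))%:E.
Proof. by move=> mA; rewrite fineK // fin_num_measure. Qed.

Lemma fineP_setC (A : set T) : measurable A -> fine (P (~` A)) = 1 - fine (P A).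
Proof. by move=> mA; rewrite probability_setC // (PfinE _ mA) -EFinB. Qed.

Lemma maxle_eq (s : seq (R * R)) r :
  [set w | (\big[maxe/-oo%E]_(x <- s) (Z x w)%:E <= r%:E)%E] =
  ~` [set w | 0 < Nseq s r w].
Proof.
elim: s => [|x s IH].
  apply/seteqP; split => w /=; rewrite /Nseq !big_nil ?ltxx ?leNye //.
apply/seteqP; split => w /=.
  rewrite big_cons ge_max => /andP[h1 h2].
  have /seteqP [E1 E2] := Nseq_cons x s r.
  move=> h0; case: (E1 w h0) => /=; first by rewrite ltNge -lee_fin h1.
  by move: IH => /seteqP [+ _] => /(_ w) /=; apply.
have /seteqP [E1 E2] := Nseq_cons x s r.
move=> h0; have h : ~ (([set w | r < Z x w] `|` [set w | 0 < Nseq s r w]) w).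
  by move=> hw; apply: h0; apply: E2.
rewrite big_cons ge_max; apply/andP; split.
  by rewrite lee_fin leNgt; apply/negP => h'; apply: h; left.
by move: IH => /seteqP [_ +] => /(_ w) /=; apply => h'; apply: h; right.
Qed.
End meas.

Section facts.
Context {d : measure_display} {T : measurableType d} {R : realType}.
Variables (P : probability T R) (Z : R * R -> T -> R) (U : set (R * R)) (F : R -> R).
Hypothesis mZ : forall x, U x -> measurable_fun setT (Z x).
Hypothesis hF : forall x, U x -> forall r, fine (P [set w | Z x w <= r]) = F r.

Lemma Pgt x r : U x -> P [set w | r < Z x w] = (1 - F r)%:E.
Proof.
move=> Ux.
have -> : [set w | r < Z x w] = ~` [set w | Z x w <= r].
  by apply/seteqP; split => w /=; rewrite ltNge => /negP.
rewrite (PfinE P _ (measurableC (mle Z U mZ x r Ux))) fineP_setC ?hF //.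
exact: mle Z U mZ x r Ux.
Qed.

Lemma sumPgt (C : {fset (R * R)}) r : (forall x, x \in C -> U x) ->
  (\sum_(x <- C) P [set w | (r < Z x w)%R] = (#|` C|%:R * (1 - F r))%:E)%E.
Proof.
move=> hC; rewrite (eq_big_seq (fun _ => (1 - F r)%:E)); last first.
  by move=> x xC; rewrite Pgt //; apply: hC.
by rewrite sumEFin big_const_seq count_predT iter_addr_0 mulr_natl.
Qed.

Lemma EN (C : {fset (R * R)}) r : (forall x, x \in C -> U x) ->
  ('E_P[Nexc Z C r] = (#|` C|%:R * (1 - F r))%:E)%E.
Proof. by move=> hC; rewrite -sumPgt // -(ENseq P Z U mZ) //. Qed.

Lemma fineEN (C : {fset (R * R)}) r : (forall x, x \in C -> U x) ->
  fine ('E_P[Nexc Z C r]) = #|` C|%:R * (1 - F r).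
Proof. by move=> hC; rewrite EN. Qed.

Lemma fine_maxle (C : {fset (R * R)}) r : (forall x, x \in C -> U x) ->
  fine (P (maxle Z C r)) = 1 - fine (P [set w | 0 < Nexc Z C r w]).
Proof.
move=> hC; rewrite /maxle /maxZ maxle_eq fineP_setC //.
exact: (mNseq Z U mZ).
Qed.

Lemma p_bounds (C : {fset (R * R)}) r : (forall x, x \in C -> U x) ->
  0 <= fine (P [set w | 0 < Nexc Z C r w]) <= fine ('E_P[Nexc Z C r]).
Proof.
move=> hC; rewrite fine_ge0 ?measure_ge0 //=.
rewrite EN //=.
have mN := mNseq Z U mZ (enum_fset C) r hC.
have := PNseq_le P Z U mZ (enum_fset C) r hC; rewrite sumPgt // => h.
have := fine_le (fin_num_measure P _ mN) _ h; apply; by [].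
Qed.

Lemma condE_inv (C : {fset (R * R)}) r :
  (condE P (Nexc Z C r) [set w | 0 < Nexc Z C r w])^-1 =
  fine (P [set w | 0 < Nexc Z C r w]) / fine ('E_P[Nexc Z C r]).
Proof.
rewrite /condE invf_div.
have -> : (Nexc Z C r \* \1_[set w | 0 < Nexc Z C r w]) = Nexc Z C r => //.
apply/funext => w /=; rewrite indicE.
case: (boolP (0 < Nexc Z C r w)) => h.
  by rewrite mem_set // mulr1.
have h0 := Nseq_ge0 Z C r w.
have -> : Nexc Z C r w = 0 by apply/eqP; rewrite eq_le h0 andbT leNgt.
by rewrite mul0r.
Qed.
End facts.

Theorem proposition2p3 (d : measure_display) (T : measurableType d)
  (R : realType) (P : probability T R)
  (A : nat -> {fset (R * R)}) (Z : R * R -> T -> R) (F : R -> R)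
  (tau : R) (u : nat -> R) (k l : nat -> nat)
  (B : nat -> nat -> nat -> {fset (R * R)}) (theta : R) :
  (* A_n increasing, f(n) = #A_n -> +oo *)
  (forall n, (A n `<=` A n.+1)%fset) ->
  nat_to_infty (fun n => #|` A n|) ->
  (* S = \bigcup_n A_n consists of isolated points of R^2 *)
  (forall x, (exists n, x \in A n) ->
     exists2 e : R, 0 < e & forall y, (exists n, y \in A n) ->
       `|y.1 - x.1| < e -> `|y.2 - x.2| < e -> y = x) ->
  (* {Z(x) : x in S} is a random field, all Z(x) with distribution function F *)
  (forall x, (exists n, x \in A n) -> measurable_fun setT (Z x)) ->
  (forall x, (exists n, x \in A n) -> forall r : R,
     fine (P [set w | Z x w <= r]) = F r) ->
  (* tau > 0 and E(sum_{x in A_n} 1_{Z(x) > u_n}) -> tau *)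
  0 < tau ->
  (fun n => fine ('E_P[Nexc Z (A n) (u n)])) @ \oo --> tau ->
  (* condition D(u_n(tau), k_n, l_n) *)
  condD P Z A u k l ->
  (* the blocks B_n^(s,t), s, t = 1..k_n (indexed here by 0..k_n - 1) *)
  (forall n s t, (s < k n)%N -> (t < k n)%N -> (B n s t `<=` A n)%fset) ->
  (forall n s t s' t', (s < k n)%N -> (t < k n)%N -> (s' < k n)%N ->
     (t' < k n)%N -> (s, t) != (s', t') ->
     (B n s t `&` B n s' t')%fset = fset0) ->
  (forall e : R, 0 < e -> \forall n \near \oo, forall s t,
     (s < k n)%N -> (t < k n)%N ->
     `| (#|` B n s t|)%:R * ((k n) ^ 2)%:R / (#|` A n|)%:R - 1 | <= e) ->
  (fun n => fine (P (maxle Z (A n) (u n)))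
     - \prod_(s < k n) \prod_(t < k n) fine (P (maxle Z (B n s t) (u n))))
    @ \oo --> (0 : R) ->
  spatial_extremal_index P Z A theta ->
  (fun n => ((k n) ^ 2)%:R^-1 *
     \sum_(s < k n) \sum_(t < k n)
        (condE P (Nexc Z (B n s t) (u n))
               [set w | 0 < Nexc Z (B n s t) (u n) w])^-1) @ \oo --> theta
  /\
  ((forall e : R, 0 < e -> \forall n \near \oo, forall s t,
      (s < k n)%N -> (t < k n)%N ->
      `| condE P (Nexc Z (B n s t) (u n))
               [set w | 0 < Nexc Z (B n s t) (u n) w] - 1 | <= e) ->
   theta = 1).
Proof.
move=> hinc hAinf hiso hmeas hF htau hE hD hBsub hdisj hBcard hdiff hsei.
set U := fun x : R * R => exists n, x \in A n.
have mZ : forall x, U x -> measurable_fun setT (Z x) by exact: hmeas.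
have hF' : forall x, U x -> forall r, fine (P [set w | Z x w <= r]) = F r by exact: hF.
have hBU : forall n (x : 'I_(k n) * 'I_(k n)) y, y \in B n x.1 x.2 -> U y.
  move=> n x y yB; exists n; exact: (fsubsetP (hBsub n _ _ (ltn_ord x.1) (ltn_ord x.2))).
have hAU : forall n y, y \in A n -> U y by move=> n y yA; exists n.
case: hD => -[_ k0] [_ kinf] _ _ _.
pose p n (x : 'I_(k n) * 'I_(k n)) :=
  fine (P [set w | 0 < Nexc Z (B n x.1 x.2) (u n) w]).
pose e n (x : 'I_(k n) * 'I_(k n)) := fine ('E_P[Nexc Z (B n x.1 x.2) (u n)])%E.
have Hf : (fun n => ((k n) ^ 2)%:R^-1 *
     \sum_(s < k n) \sum_(t < k n)
        (condE P (Nexc Z (B n s t) (u n))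
               [set w | 0 < Nexc Z (B n s t) (u n) w])^-1) =
   (fun n => ((k n) ^ 2)%:R^-1 * \sum_x (p n x / e n x)).
  apply/funext => n; rewrite pair_bigA; congr (_ * _).
  by apply: eq_bigr => x _; rewrite condE_inv.
have hpe : forall n x, 0 <= p n x <= e n x.
  move=> n x; rewrite /p /e; apply: (p_bounds P Z U F mZ hF'); exact: hBU.
have hEA : (fun n => (#|` A n|)%:R * (1 - F (u n))) @ \oo --> tau.
  have eqA : (fun n => fine ('E_P[Nexc Z (A n) (u n)])%E) =
             (fun n => (#|` A n|)%:R * (1 - F (u n))).
    apply/funext => n; rewrite (fineEN P Z U F mZ hF') //; exact: hAU.
  by rewrite -eqA.
have he : forall eps, 0 < eps -> \forall n \near \oo, forall x,
    `|((k n)^2)%:R * e n x - tau| <= eps.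
  move=> eps e0.
  set e1 := eps / (2 * (tau + 1)).
  set e2 := Num.min 1 (eps / 2).
  have e10 : 0 < e1 by rewrite divr_gt0 // mulr_gt0 //; lra.
  have e20 : 0 < e2 by rewrite lt_min ltr01 divr_gt0.
  move/cvgrPdist_le: hEA => /(_ e2 e20) hEA'.
  have hB1 := hBcard e1 e10.
  near=> n.
  have hA : `|tau - (#|` A n|)%:R * (1 - F (u n))| <= e2 by near: n; exact: hEA'.
  have hBn : forall s t, (s < k n)%N -> (t < k n)%N ->
     `| (#|` B n s t|)%:R * ((k n) ^ 2)%:R / (#|` A n|)%:R - 1 | <= e1.
    by near: n; exact: hB1.
  have hA0 : (1 <= #|` A n|)%N by near: n; exact: hAinf 1%N.
  move=> x; rewrite /e (fineEN P Z U F mZ hF'); last exact: hBU.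
  have hBx := hBn _ _ (ltn_ord x.1) (ltn_ord x.2).
  set rho := (#|` B n x.1 x.2|)%:R * ((k n) ^ 2)%:R / (#|` A n|)%:R in hBx.
  set y := (#|` A n|)%:R * (1 - F (u n)) in hA.
  have A0 : (#|` A n|)%:R != 0 :> R by rewrite pnatr_eq0 -lt0n.
  have -> : ((k n)^2)%:R * ((#|` B n x.1 x.2|)%:R * (1 - F (u n))) = rho * y.
    by rewrite /rho /y; field.
  have -> : rho * y - tau = (rho - 1) * y + (y - tau) by ring.
  have hy : `|y| <= tau + 1.
    move/ler_normlP: hA => [h1 h2].
    have : e2 <= 1 by rewrite ge_min lexx.
    move=> h3; rewrite ler_norml; apply/andP; split; lra.
  have h1 : `|(rho - 1) * y| <= eps / 2.
    rewrite normrM; apply: (le_trans (ler_pM _ _ hBx hy)) => //.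
    have t1 : tau + 1 != 0 by rewrite gt_eqF //; lra.
    have -> : e1 * (tau + 1) = eps / 2 by rewrite /e1; field.
    by [].
  have h2 : `|y - tau| <= eps / 2.
    by rewrite distrC; apply: (le_trans hA); rewrite ge_min lexx orbT.
  apply: (le_trans (ler_normD _ _)); lra.
have hprod : (fun n => \prod_x (1 - p n x)) @ \oo --> expR (- (theta * tau)).
  have h1 := hsei tau htau u hE.
  have -> : (fun n => \prod_x (1 - p n x)) =
     (fun n => fine (P (maxle Z (A n) (u n)))) -
     (fun n => fine (P (maxle Z (A n) (u n)))
       - \prod_(s < k n) \prod_(t < k n) fine (P (maxle Z (B n s t) (u n)))).
    apply/funext => n /=; rewrite opprB addrC subrK pair_bigA.
    by apply: eq_bigr => x _; rewrite (fine_maxle P Z U mZ) //; exact: hBU.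
  rewrite -[expR _]subr0; exact: cvgB.
have part1 : (fun n => ((k n) ^ 2)%:R^-1 * \sum_x (p n x / e n x)) @ \oo --> theta.
  suff : (fun n => ((k n) ^ 2)%:R^-1 * \sum_x (p n x / e n x)) @ \oo --> theta * tau / tau.
    by rewrite mulfK // gt_eqF.
  exact: (core _ _ _ _ _ _ htau kinf hpe he hprod).
split; first by rewrite Hf.
move=> huni.
have part2 : (fun n => ((k n) ^ 2)%:R^-1 *
     \sum_(s < k n) \sum_(t < k n)
        (condE P (Nexc Z (B n s t) (u n))
               [set w | 0 < Nexc Z (B n s t) (u n) w])^-1) @ \oo --> (1 : R).
  have -> : (fun n => ((k n) ^ 2)%:R^-1 *
     \sum_(s < k n) \sum_(t < k n)
        (condE P (Nexc Z (B n s t) (u n))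
               [set w | 0 < Nexc Z (B n s t) (u n) w])^-1) =
     (fun n => ((k n) ^ 2)%:R^-1 * \sum_(x : 'I_(k n) * 'I_(k n))
        (condE P (Nexc Z (B n x.1 x.2) (u n))
               [set w | 0 < Nexc Z (B n x.1 x.2) (u n) w])^-1).
    by apply/funext => n; rewrite pair_bigA.
  apply: avg_to1 => // eps e0.
  near=> n.
  have h : forall s t, (s < k n)%N -> (t < k n)%N ->
      `| condE P (Nexc Z (B n s t) (u n))
               [set w | 0 < Nexc Z (B n s t) (u n) w] - 1 | <= eps.
    by near: n; exact: huni.
  by move=> x; apply: h.
rewrite Hf in part2.
exact: (cvg_unique _ part1 part2).
Unshelve. all: end_near.
Qed.
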